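(* Let $A_1,\dots,A_m\in\mathbb{S}^n$, $b\in\mathbb{R}^m$, $C\in\mathbb{S}^n$, and let Assumption 1 hold for some $p$. If $Y\in\mathcal{M}_p$ has $\operatorname{rank}(Y)<p$ and $\operatorname{Hess}g(Y)\succeq-\varepsilon_H\operatorname{Id}$, then $S(Y)\succeq-\frac{\varepsilon_H}{2}I_n$.
   Context: $\mathbb{S}^n$: real symmetric $n\times n$ matrices; $\langle U,V\rangle=\operatorname{tr}(U^\top V)$, $\|\cdot\|$ Frobenius norm. $\mathcal{A}(X)_i=\langle A_i,X\rangle$, $\mathcal{A}^*(\nu)=\sum_i\nu_iA_i$. $\mathcal{M}_p=\{Y\in\mathbb{R}^{n\times p}:\mathcal{A}(YY^\top)=b\}$, $g(Y)=\langle CY,Y\rangle$. Assumption 1 (for $p$): either (a) $A_1Y,\dots,A_mY$ are linearly independent for all $Y\in\mathcal{M}_p$, or (b) $\operatorname{span}\{A_1Y,\dots,A_mY\}$ has constant dimension on an open neighborhood of $\mathcal{M}_p$. For $Y\in\mathcal{M}_p$: $T_Y=\{\dot Y:\langle A_iY,\dot Y\rangle=0\ \forall i\}$, $P_Y$ orthogonal projector onto $T_Y$; $G_{ij}=\langle A_iY,A_jY\rangle$, $\mu=G^\dagger\mathcal{A}(CYY^\top)$, $S(Y)=C-\mathcal{A}^*(\mu)$. The Riemannian Hessian is $\operatorname{Hess}g(Y)[\dot Y]=2P_Y(S(Y)\dot Y)$ for $\dot Y\in T_Y$; $\operatorname{Hess}g(Y)\succeq-\varepsilon_H\operatorname{Id}$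 means $\langle\dot Y,\operatorname{Hess}g(Y)[\dot Y]\rangle\ge-\varepsilon_H\|\dot Y\|^2$ for all $\dot Y\in T_Y$. *)

(* Defs.v *)
From HB Require Import structures.
From mathcomp Require Import all_boot all_order all_algebra.
From mathcomp Require Import reals.
From Stdlib Require Import ClassicalEpsilon.
Set Implicit Arguments. Unset Strict Implicit. Unset Printing Implicit Defensive.
Import Order.TTheory GRing.Theory Num.Theory.
Local Open Scope ring_scope.

Section Defs.
Variable R : realType.

Definition frob {k l : nat} (U V : 'M[R]_(k, l)) : R := \tr (U^T *m V).

Definition symmx {n : nat} (M : 'M[R]_n) : Prop := M^T = M.

Definition psd {n : nat} (M : 'M[R]_n) : Prop :=
  forall x : 'cV[R]_n, 0 <= (x^T *m M *m x) 0 0.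

Definition is_pinv {m : nat} (G X : 'M[R]_m) : Prop :=
  [/\ G *m X *m G = G, X *m G *m X = X, (G *m X)^T = G *m X & (X *m G)^T = X *m G].
Definition pinv {m : nat} (G : 'M[R]_m) : 'M[R]_m :=
  epsilon (inhabits 0) (is_pinv G).

Variables (n m p : nat) (A : 'I_m -> 'M[R]_n) (b : 'I_m -> R) (C : 'M[R]_n).

Definition Aop (X : 'M[R]_n) : 'cV[R]_m := \col_i frob (A i) X.
Definition Aadj (nu : 'cV[R]_m) : 'M[R]_n := \sum_i nu i 0 *: A i.

Definition onM (Y : 'M[R]_(n, p)) : Prop := forall i, frob (A i) (Y *m Y^T) = b i.

(* rows are vec(A_i Y); its rank is dim span{A_1 Y,...,A_m Y} *)
Definition AYmx (Y : 'M[R]_(n, p)) : 'M[R]_(m, n * p) :=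
  \matrix_(i < m) mxvec (A i *m Y).

Definition assumption1 : Prop :=
  (forall Y, onM Y -> row_free (AYmx Y)) \/
  (exists U : 'M[R]_(n, p) -> Prop,
      (forall Y, onM Y -> U Y) /\
      (forall Y, U Y -> exists e : R, 0 < e /\
          forall Z, frob (Z - Y) (Z - Y) < e ^+ 2 -> U Z) /\
      (exists d : nat, forall Y, U Y -> \rank (AYmx Y) = d)).

Definition tangent (Y Yd : 'M[R]_(n, p)) : Prop := forall i, frob (A i *m Y) Yd = 0.

Definition is_orth_proj (Y Z W : 'M[R]_(n, p)) : Prop :=
  tangent Y W /\ forall V, tangent Y V -> frob (Z - W) V = 0.
Definition PY (Y Z : 'M[R]_(n, p)) : 'M[R]_(n, p) :=
  epsilon (inhabits 0) (is_orth_proj Y Z).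

Definition Gram (Y : 'M[R]_(n, p)) : 'M[R]_m := \matrix_(i, j) frob (A i *m Y) (A j *m Y).
Definition mu (Y : 'M[R]_(n, p)) : 'cV[R]_m := pinv (Gram Y) *m Aop (C *m Y *m Y^T).
Definition Smat (Y : 'M[R]_(n, p)) : 'M[R]_n := C - Aadj (mu Y).

(* Riemannian Hessian of g(Y) = <CY,Y> *)
Definition Hess (Y Yd : 'M[R]_(n, p)) : 'M[R]_(n, p) := 2%:R *: PY Y (Smat Y *m Yd).

Definition hess_lb (Y : 'M[R]_(n, p)) (eps : R) : Prop :=
  forall Yd, tangent Y Yd -> - eps * frob Yd Yd <= frob Yd (Hess Y Yd).
End Defs.

(* Main.v *)
Require Import Defs.
From HB Require Import structures.
From mathcomp Require Import all_boot all_order all_algebra.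
From mathcomp Require Import reals.
From mathcomp Require Import ring lra.
From Stdlib Require Import ClassicalEpsilon.
Import Order.TTheory GRing.Theory Num.Theory.
Local Open Scope ring_scope.

Section Helpers.
Variable R : realType.

Lemma frobE k l (U V : 'M[R]_(k,l)) : frob U V = \sum_i \sum_j U i j * V i j.
Proof.
rewrite /frob /mxtrace exchange_big /=; apply: eq_bigr => j _.
by rewrite !mxE; apply: eq_bigr => i _; rewrite mxE.
Qed.

Lemma frobC k l (U V : 'M[R]_(k,l)) : frob U V = frob V U.
Proof. by rewrite !frobE; apply: eq_bigr => i _; apply: eq_bigr => j _; rewrite mulrC. Qed.

Lemma frobDr k l (U V W : 'M[R]_(k,l)) : frob U (V + W) = frob U V + frob U W.
Proof. by rewrite /frob mulmxDr mxtraceD. Qed.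

Lemma frobNr k l (U V : 'M[R]_(k,l)) : frob U (- V) = - frob U V.
Proof. by rewrite /frob mulmxN linearN. Qed.

Lemma frobBr k l (U V W : 'M[R]_(k,l)) : frob U (V - W) = frob U V - frob U W.
Proof. by rewrite frobDr frobNr. Qed.

Lemma frobZr k l (U V : 'M[R]_(k,l)) a : frob U (a *: V) = a * frob U V.
Proof. by rewrite /frob -scalemxAr mxtraceZ. Qed.

Lemma frob_sumr k l I (r : seq I) (P : pred I) (U : 'M[R]_(k,l)) F :
  frob U (\sum_(i <- r | P i) F i) = \sum_(i <- r | P i) frob U (F i).
Proof.
elim/big_rec2: _ => [|i y1 y2 _ <-]; first by rewrite /frob mulmx0 mxtrace0.
by rewrite frobDr.
Qed.

Lemma frob_suml k l I (r : seq I) (P : pred I) (U : 'M[R]_(k,l)) F :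
  frob (\sum_(i <- r | P i) F i) U = \sum_(i <- r | P i) frob (F i) U.
Proof. by rewrite frobC frob_sumr; apply: eq_bigr => i _; rewrite frobC. Qed.

Lemma frobZl k l (U V : 'M[R]_(k,l)) a : frob (a *: V) U = a * frob V U.
Proof. by rewrite frobC frobZr frobC. Qed.

Lemma frob_ge0 k l (U : 'M[R]_(k,l)) : 0 <= frob U U.
Proof. by rewrite frobE; apply: sumr_ge0 => i _; apply: sumr_ge0 => j _; rewrite -expr2 sqr_ge0. Qed.

Lemma frob_eq0 k l (U : 'M[R]_(k,l)) : frob U U = 0 -> U = 0.
Proof.
rewrite frobE => /eqP; rewrite psumr_eq0; last first.
  by move=> i _; apply: sumr_ge0 => j _; rewrite -expr2 sqr_ge0.
move=> /allP H; apply/matrixP => i j; rewrite mxE.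
have := H i (mem_index_enum i); rewrite psumr_eq0; last first.
  by move=> j' _; rewrite -expr2 sqr_ge0.
move=> /allP /(_ j (mem_index_enum j)) /eqP.
by rewrite -expr2 => /eqP; rewrite sqrf_eq0 => /eqP.
Qed.


Lemma proj_exists n m p (A : 'I_m -> 'M[R]_n) (Y Z : 'M[R]_(n, p)) :
  exists W, is_orth_proj A Y Z W.
Proof.
set B := fun i => A i *m Y.
set G := Gram A Y.
have GE : forall i j, G i j = frob (B i) (B j) by move=> i j; rewrite /G /Gram mxE.
set r : 'rV[R]_m := \row_j frob (B j) Z.
have : (r <= G)%MS.
  rewrite submxE; apply/eqP/matrixP => i k; rewrite !mxE.
  set K := cokermx G.
  have GK0 : G *m K = 0 by rewrite mulmx_coker.
  clearbody K.
  set D := \sum_j K j k *: B j.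
  have D0 : D = 0.
    apply: frob_eq0.
    have : (K^T *m (G *m K)) k k = 0 by rewrite GK0 mulmx0 mxE.
    rewrite mxE => <-.
    rewrite /D frob_suml; apply: eq_bigr => a _.
    rewrite frobZl frob_sumr !mxE.
    congr (_ * _); apply: eq_bigr => b _; rewrite frobZr GE; ring.
  have F0 : frob D Z = 0.
    by rewrite D0 frobE big1 // => i1 _; rewrite big1 // => j _; rewrite mxE mul0r.
  apply: etrans F0; rewrite /D frob_suml.
  apply: eq_bigr => j _; rewrite frobZl /r mxE; ring.
move=> /submxP [c rE].
exists (Z - \sum_i c 0 i *: B i); split.
  move=> j; rewrite frobBr frob_sumr.
  have := congr1 (fun M : 'rV[R]_m => M 0 j) rE; rewrite /r !mxE => ->.
  apply/eqP; rewrite subr_eq0; apply/eqP; apply: eq_bigr => i _; rewrite frobZr GE frobC //.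
move=> V tV; rewrite opprB addrC subrK frob_suml big1 // => i _.
by rewrite frobZl tV mulr0.
Qed.

Lemma PY_spec n m p (A : 'I_m -> 'M[R]_n) (Y Z : 'M[R]_(n, p)) :
  is_orth_proj A Y Z (PY A Y Z).
Proof. by rewrite /PY; apply: epsilon_spec; apply: proj_exists. Qed.


Lemma frob_outer n p (x y : 'cV[R]_n) (z : 'cV[R]_p) :
  frob (x *m z^T) (y *m z^T) = frob x y * frob z z.
Proof.
rewrite !frobE big_distrl /=; apply: eq_bigr => i _.
rewrite big_ord1 big_distrr /=; apply: eq_bigr => j _.
rewrite big_ord1 !mxE !big_ord1 !mxE; ring.
Qed.

Lemma frob_cV n (x y : 'cV[R]_n) : frob x y = (x^T *m y) 0 0.
Proof. by rewrite /frob /mxtrace big_ord1. Qed.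

Lemma ker_vec n p (Y : 'M[R]_(n, p)) : (\rank Y < p)%N ->
  exists z : 'cV[R]_p, Y *m z = 0 /\ 0 < frob z z.
Proof.
move=> rk.
set K := kermx Y^T.
have : K != 0 by rewrite -mxrank_eq0 mxrank_ker mxrank_tr subn_eq0 -ltnNge.
have KY : K *m Y^T = 0 by apply/eqP; rewrite -sub_kermx.
move=> /eqP K0.
have [k Hk] : exists k, row k K != 0.
  case: (pickP (fun k => row k K != 0)) => [k Hk|H]; first by exists k.
  exfalso; apply: K0; apply/row_matrixP => k; rewrite row0.
  by apply/eqP; rewrite -[_ == _]negbK H.
exists (row k K)^T; split.
  by apply: trmx_inj; rewrite trmx_mul trmxK -row_mul KY row0 trmx0.
rewrite lt_def frob_ge0 andbT; apply/negP => /eqP /frob_eq0 /eqP.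
by rewrite trmx_eq0 (negbTE Hk).
Qed.
End Helpers.

Theorem lemma5 (R : realType) (n m p : nat) (A : 'I_m -> 'M[R]_n) (b : 'I_m -> R)
    (C : 'M[R]_n) (epsH : R) (Y : 'M[R]_(n, p)) :
  (forall i, symmx (A i)) -> symmx C ->
  assumption1 p A b ->
  onM A b Y ->
  (\rank Y < p)%N ->
  hess_lb A C Y epsH ->
  psd (Smat A C Y + (epsH / 2%:R)%:M).
Proof.
move=> _ _ _ _ rk H x.
have [z [Yz zpos]] := @ker_vec R _ _ Y rk.
set S := Smat A C Y.
set Yd := x *m z^T.
have tYd : tangent A Y Yd.
  move=> i; rewrite /frob /Yd mulmxA mxtrace_mulC mulmxA.
  by rewrite trmx_mul !mulmxA -[z^T *m Y^T]trmx_mul Yz trmx0 !mul0mx mxtrace0.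
have := H Yd tYd.
have [tP oP] := @PY_spec R _ _ _ A Y (S *m Yd).
rewrite /Hess frobZr.
have -> : frob Yd (PY A Y (S *m Yd)) = frob Yd (S *m Yd).
  by move: (oP Yd tYd); rewrite frobC frobBr => /eqP; rewrite subr_eq0 => /eqP ->.
rewrite /Yd mulmxA !frob_outer => Hq.
have -> : (x^T *m (S + (epsH / 2%:R)%:M) *m x) 0 0 = frob x (S *m x) + epsH / 2%:R * frob x x.
  by rewrite !frob_cV mulmxDr mulmxDl mul_mx_scalar -scalemxAl mulmxA !mxE.
have q0 := @frob_ge0 R _ _ x.
have H2 : 0 <= (2 * frob x (S *m x) + epsH * frob x x) * frob z z.
  rewrite -subr_ge0 subr0; move: Hq; rewrite -subr_ge0 => Hq.
  have -> : (2 * frob x (S *m x) + epsH * frob x x) * frob z z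
     = 2%:R * (frob x (S *m x) * frob z z) - - epsH * (frob x x * frob z z) by ring.
  exact: Hq.
rewrite pmulr_lge0 // in H2.
lra.
Qed.
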